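(* The functor $H\colon\mathrm{SPP}\to\mathrm{EEED}$ is well defined and gives an equivalence from $\mathrm{SPP}$ to the full subcategory $\{M\in\mathrm{EEED}:\eta=0\}$ of exact extended $\eta$-diagrams whose map $\eta$ is zero.
   Context: For an abelian group $U$, $U[2]=\{u:2u=0\}$, $U/2=U/2U$, and $\bar c=c+2C$. An extended $\eta$-diagram is a diagram of abelian groups $B\xrightarrow{\psi}A\xrightarrow{\eta}C\xrightarrow{\chi}B$ with $2\eta=0$, $\psi\chi=0$, $\chi\eta\psi=2\cdot1_B$; morphisms are triples $(f\colon A\to A',g\colon B\to B',h\colon C\to C')$ commuting with $\psi,\eta,\chi$. It is exact if the induced sequence $C/2\xrightarrow{\chi}B\xrightarrow{\psi}A[2]$ is short exact; $\mathrm{EEED}$ is the category of these. The category $\mathrm{SPP}$ has objects pairs $(A,C)$ of abelian groups; morphisms $(A_0,C_0)\to(A_1,C_1)$ are triples $(f,h,u)$ with $f\colon A_0\to A_1$, $h\colon C_0\to C_1$, $u\colon A_0[2]\to C_1/2$; identities are $(1,1,0)$ and the composite of $(f_0,h_0,u_0)$ followed by $(f_1,h_1,u_1)$ is $(f_1f_0,h_1h_0,h_1\circ u_0+u_1\circ f_0)$. The functor $H$ sends $(A,C)$ to the diagram $C/2\oplus A[2]\xrightarrow{\psi}A\xrightarrow{0}C\xrightarrow{\chi}C/2\oplus A[2]$ with $\psi(\bar c,a)=a$ and $\chi(c)=(\bar c,0)$, and sends $(f,h,u)$ to the morphism $(f,g,h)$ where $g(\bar c_0,a_0)=(\overline{h(c_0)}+u(a_0),f(a_0))$.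 *)

(* Defs.v *)
From HB Require Import structures.
From mathcomp Require Import all_boot all_order all_algebra.
From mathcomp Require Import boolp.
From mathcomp Require Import generic_quotient ring_quotient.
Import Quotient.
Set Implicit Arguments. Unset Strict Implicit. Unset Printing Implicit Defensive.
Import GRing.Theory.
Local Open Scope quotient_scope.
Local Open Scope ring_scope.

Definition twice (U : zmodType) : {pred U} :=
  fun x => `[< exists d : U, x = d *+ 2 >].
Arguments twice U : clear implicits.

Lemma twice_zmod_closed (U : zmodType) : zmod_closed (twice U).
Proof.
split.
  by apply/asboolP; exists 0; rewrite mul0rn.
move=> x y /asboolP[a ->] /asboolP[b ->]; apply/asboolP.
by exists (a - b); rewrite mulrnBl.
Qed.

HB.instance Definition _ (U : zmodType) :=
  GRing.isZmodClosed.Build U (twice U) (twice_zmod_closed U).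

Definition mod2 (U : zmodType) : zmodType := Quotient.quot (twice U).
Definition cls2 (U : zmodType) (c : U) : mod2 U := \pi_(mod2 U) c.

Definition tors2_pred (U : zmodType) : {pred U} := fun x => x *+ 2 == 0.
Arguments tors2_pred U : clear implicits.

Lemma tors2_zmod_closed (U : zmodType) : zmod_closed (tors2_pred U).
Proof.
split; first by rewrite /tors2_pred unfold_in /= mul0rn.
move=> x y; rewrite /tors2_pred !unfold_in /= => /eqP hx /eqP hy.
by rewrite mulrnBl hx hy subr0.
Qed.

HB.instance Definition _ (U : zmodType) :=
  GRing.isZmodClosed.Build U (tors2_pred U) (tors2_zmod_closed U).

Record tors2 (U : zmodType) := Tors2 { tval : U; _ : tval \in tors2_pred U }.

HB.instance Definition _ (U : zmodType) := [isSub for (@tval U)].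
HB.instance Definition _ (U : zmodType) := [Choice of tors2 U by <:].
HB.instance Definition _ (U : zmodType) :=
  [SubChoice_isSubZmodule of tors2 U by <:].

Record diag := Diag {
  dA : zmodType; dB : zmodType; dC : zmodType;
  dpsi : dB -> dA; deta : dA -> dC; dchi : dC -> dB }.
Arguments dpsi d _ : clear implicits.
Arguments deta d _ : clear implicits.
Arguments dchi d _ : clear implicits.

Definition is_eed (M : diag) : Prop :=
  [/\ zmod_morphism (dpsi M), zmod_morphism (deta M), zmod_morphism (dchi M)
    & [/\ (forall a, deta M a *+ 2 = 0),
           (forall c, dpsi M (dchi M c) = 0) &
           (forall b, dchi M (deta M (dpsi M b)) = b *+ 2)]].

(* Exactness: the induced sequence C/2 --chi--> B --psi--> A[2] is short
   exact, written out: the induced map on C/2 is injective, its image is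
   the kernel of the induced map to A[2], and the latter is surjective.   *)
Definition is_exact (M : diag) : Prop :=
  [/\ (forall c, dchi M c = 0 -> cls2 c = 0),
      (forall b, dpsi M b = 0 <-> exists c, b = dchi M c) &
      (forall a : tors2 (dA M), exists b, dpsi M b = tval a)].

Record dmor (M N : diag) := DMor {
  mf : dA M -> dA N; mg : dB M -> dB N; mh : dC M -> dC N }.
Arguments mf {M N} d _.
Arguments mg {M N} d _.
Arguments mh {M N} d _.

Definition is_dmor (M N : diag) (m : dmor M N) : Prop :=
  [/\ zmod_morphism (mf m), zmod_morphism (mg m), zmod_morphism (mh m)
    & [/\ (forall b, mf m (dpsi M b) = dpsi N (mg m b)),
           (forall a, mh m (deta M a) = deta N (mf m a)) &
           (forall c, mg m (dchi M c) = dchi N (mh m c))]].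

Definition dmor_id (M : diag) : dmor M M := DMor id id id.
Definition dmor_comp (M N P : diag) (m : dmor M N) (n : dmor N P) : dmor M P :=
  DMor (mf n \o mf m) (mg n \o mg m) (mh n \o mh m).
Definition dmor_eq (M N : diag) (m n : dmor M N) : Prop :=
  [/\ mf m =1 mf n, mg m =1 mg n & mh m =1 mh n].

Record sppObj := SPP { sA : zmodType; sC : zmodType }.

Record sppMor (X Y : sppObj) := SPPMor {
  sf : sA X -> sA Y; sh : sC X -> sC Y; su : tors2 (sA X) -> mod2 (sC Y) }.
Arguments sf {X Y} s _.
Arguments sh {X Y} s _.
Arguments su {X Y} s _.

Definition is_sppMor (X Y : sppObj) (m : sppMor X Y) : Prop :=
  [/\ zmod_morphism (sf m), zmod_morphism (sh m) & zmod_morphism (su m)].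

Definition map2 (U V : zmodType) (h : U -> V) (x : mod2 U) : mod2 V :=
  cls2 (h (repr x)).
(* map induced on U[2] by f : U -> V (correct when f is additive) *)
Definition mapt (U V : zmodType) (f : U -> V) (a : tors2 U) : tors2 V :=
  insubd 0 (f (tval a)).

Definition spp_id (X : sppObj) : sppMor X X := SPPMor id id (fun _ => 0).
Definition spp_comp (X Y Z : sppObj) (m : sppMor X Y) (n : sppMor Y Z) :
  sppMor X Z :=
  SPPMor (sf n \o sf m) (sh n \o sh m)
         (fun a => map2 (sh n) (su m a) + su n (mapt (sf m) a)).
Definition spp_eq (X Y : sppObj) (m n : sppMor X Y) : Prop :=
  [/\ sf m =1 sf n, sh m =1 sh n & su m =1 su n].

Definition HB_ (X : sppObj) : zmodType := (mod2 (sC X) * tors2 (sA X))%type.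

Definition Hobj (X : sppObj) : diag :=
  @Diag (sA X) (HB_ X) (sC X)
    (fun p => tval p.2) (fun _ => 0) (fun c => (cls2 c, 0)).

Definition Hmor (X Y : sppObj) (m : sppMor X Y) : dmor (Hobj X) (Hobj Y) :=
  @DMor (Hobj X) (Hobj Y) (sf m)
    (fun p => (map2 (sh m) p.1 + su m p.2, mapt (sf m) p.2)) (sh m).

(* Main.v *)
Require Import Defs.
From HB Require Import structures.
From mathcomp Require Import all_boot all_order all_algebra.
From mathcomp Require Import boolp classical_sets.
From mathcomp Require Import generic_quotient ring_quotient.
Set Implicit Arguments. Unset Strict Implicit. Unset Printing Implicit Defensive.
Import GRing.Theory.
Local Open Scope ring_scope.

Section Aux.
Local Open Scope quotient_scope.
Local Open Scope classical_set_scope.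

Section ZM.
Variables (U V : zmodType) (f : U -> V) (hf : zmod_morphism f).
Lemma zm0 : f 0 = 0.
Proof. by rewrite -(subrr 0) hf subrr. Qed.
Lemma zmN x : f (- x) = - f x.
Proof. by rewrite -sub0r hf zm0 sub0r. Qed.
Lemma zmD x y : f (x + y) = f x + f y.
Proof. by have := hf x (- y); rewrite opprK => ->; rewrite zmN opprK. Qed.
Lemma zm2 x : f (x *+ 2) = f x *+ 2.
Proof. by rewrite !mulr2n zmD. Qed.
End ZM.

Section Q.
Variable U : zmodType.
Lemma cls2_eqP (x y : U) : cls2 x = cls2 y <-> exists d : U, x - y = d *+ 2.
Proof.
rewrite /cls2; split.
  move/eqP; rewrite -Quotient.idealrBE => /asboolP //.
move=> h; apply/eqP; rewrite -Quotient.idealrBE; exact/asboolP.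
Qed.
Lemma cls2D (x y : U) : cls2 (x + y) = cls2 x + cls2 y.
Proof. by rewrite /cls2 raddfD. Qed.
Lemma cls20 : cls2 (0 : U) = 0.
Proof. by rewrite /cls2 raddf0. Qed.
Lemma cls2K (x : mod2 U) : cls2 (repr x) = x.
Proof. by rewrite /cls2 reprK. Qed.
Lemma cls2_2 (x : U) : cls2 (x *+ 2) = 0.
Proof. by rewrite -cls20; apply/cls2_eqP; exists x; rewrite subr0. Qed.
Lemma mod2_2 (x : mod2 U) : x *+ 2 = 0.
Proof. by rewrite -(cls2K x) !mulr2n -cls2D -mulr2n cls2_2. Qed.
Lemma repr_cls2 (x : U) : exists d, repr (cls2 x) - x = d *+ 2.
Proof. by apply/cls2_eqP; rewrite cls2K. Qed.
Lemma tval_add (a b : tors2 U) : Defs.tval (a + b) = Defs.tval a + Defs.tval b.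
Proof. by []. Qed.
Lemma tval0 : Defs.tval (0 : tors2 U) = 0.
Proof. by []. Qed.
Lemma tval_2 (a : tors2 U) : Defs.tval a *+ 2 = 0.
Proof. by case: a => x /= /eqP. Qed.
Lemma tors2_2 (a : tors2 U) : a *+ 2 = 0.
Proof. by apply: val_inj; rewrite /= -mulr2n tval_2. Qed.
End Q.

Section Maps.
Variables (U V : zmodType).
Lemma map2_cls (h : U -> V) : zmod_morphism h -> forall x, map2 h (cls2 x) = cls2 (h x).
Proof.
move=> hh x; rewrite /map2; apply/cls2_eqP.
have [d hd] := repr_cls2 x; exists (h d).
by rewrite -hh hd (zm2 hh).
Qed.
Lemma map2D (h : U -> V) : zmod_morphism h -> forall x y, map2 h (x + y) = map2 h x + map2 h y.
Proof.
move=> hh x y; rewrite -(cls2K x) -(cls2K y) -cls2D !map2_cls // zmD //. exact: cls2D.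
Qed.
Lemma map2_morph (h : U -> V) : zmod_morphism h -> zmod_morphism (map2 h).
Proof.
move=> hh x y; have hN : forall z, map2 h (- z) = - map2 h z.
  move=> z; apply/eqP; rewrite -subr_eq0 opprK -map2D // addNr.
  have -> : (0 : mod2 U) = cls2 (0:U) by rewrite cls20.
  by rewrite map2_cls // (zm0 hh) cls20.
have := map2D hh x (- y); rewrite hN; exact.
Qed.
Lemma mapt_val (f : U -> V) : zmod_morphism f -> forall a, Defs.tval (mapt f a) = f (Defs.tval a).
Proof.
move=> hf a; rewrite /mapt insubdK //.
have h2 : f (Defs.tval a) *+ 2 == 0 by rewrite -(zm2 hf) tval_2 (zm0 hf).
exact: h2.
Qed.
Lemma mapt_morph (f : U -> V) : zmod_morphism f -> zmod_morphism (mapt f).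
Proof.
move=> hf a b; apply: val_inj; rewrite /= !mapt_val //. exact: hf.
Qed.
End Maps.

Section Maps2.
Variables (U V W : zmodType).
Lemma map2_comp (h : U -> V) (g : V -> W) : zmod_morphism h -> zmod_morphism g ->
  forall x, map2 (g \o h) x = map2 g (map2 h x).
Proof. by move=> hh hg x; rewrite [map2 h x]/map2 (map2_cls hg). Qed.
Lemma mapt_comp (f : U -> V) (g : V -> W) : zmod_morphism f -> zmod_morphism g ->
  forall a, mapt (g \o f) a = mapt g (mapt f a).
Proof.
move=> hf hg a; apply: val_inj => /=; rewrite !mapt_val //.
by move=> x y /=; rewrite hf hg.
Qed.
Lemma map2_id (x : mod2 U) : map2 id x = x.
Proof. exact: cls2K. Qed.
Lemma mapt_id (a : tors2 U) : mapt id a = a.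
Proof. by apply: val_inj => /=; rewrite mapt_val. Qed.
End Maps2.

Lemma cls2B (U : zmodType) (x y : U) : cls2 (x - y) = cls2 x - cls2 y.
Proof. by rewrite /cls2 raddfB. Qed.

Lemma pairE (U V : Type) (p q : U * V) : p.1 = q.1 -> p.2 = q.2 -> p = q.
Proof. by case: p; case: q => ? ? ? ? /= -> ->. Qed.

Lemma part1 (X : sppObj) :
  is_eed (Hobj X) /\ is_exact (Hobj X) /\ (forall a, deta (Hobj X) a = 0).
Proof.
split; last split; last by [].
- split.
  + by move=> x y.
  + by move=> x y /=; rewrite subr0.
  + by move=> x y; apply: pairE => /=; rewrite ?cls2B ?subr0.
  split.
  + by move=> a /=; rewrite mul0rn.
  + by [].
  + case=> x a /=; rewrite mulr2n; apply: pairE => /=.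
      by rewrite -mulr2n mod2_2 cls20.
    by rewrite -mulr2n tors2_2.
split.
- by move=> c /(congr1 fst).
- case=> x a /=; split.
    move=> ha; exists (repr x); rewrite cls2K; congr pair; exact: val_inj.
  by move=> [c [_ ->]].
- by move=> a; exists (0, a).
Qed.

Lemma part2 (X Y : sppObj) (m : sppMor X Y) : is_sppMor m -> is_dmor (Hmor m).
Proof.
case=> hf hh hu; split => //.
- move=> p q; apply: pairE => /=.
    by rewrite (map2_morph hh) hu addrACA opprD.
  by rewrite (mapt_morph hf).
split.
- by move=> b /=; rewrite mapt_val.
- by move=> a /=; rewrite (zm0 hh).
- move=> c /=; apply: pairE => /=.
    by rewrite map2_cls // (zm0 hu) addr0.
  exact: (zm0 (mapt_morph hf)).
Qed.

Lemma part3 (X : sppObj) : dmor_eq (Hmor (spp_id X)) (dmor_id (Hobj X)).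
Proof.
split => // -[x a] /=; apply: pairE => /=.
  by rewrite map2_id addr0.
exact: mapt_id.
Qed.

Lemma part4 (X Y Z : sppObj) (m : sppMor X Y) (n : sppMor Y Z) :
  is_sppMor m -> is_sppMor n ->
  dmor_eq (Hmor (spp_comp m n)) (dmor_comp (Hmor m) (Hmor n)).
Proof.
case=> hf hh hu [hf' hh' hu']; split => // -[x a] /=; apply: pairE => /=.
  by rewrite (map2_comp hh hh') (map2D hh') addrA.
exact: mapt_comp.
Qed.

Lemma part5 (X Y : sppObj) (n : dmor (Hobj X) (Hobj Y)) :
  is_dmor n -> exists m : sppMor X Y, is_sppMor m /\ dmor_eq (Hmor m) n.
Proof.
case=> hf hg hh [c1 c2 c3].
exists (SPPMor (mf n) (mh n) (fun a => (mg n (0, a)).1)); split.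
  split => // x y /=.
  have -> : ((0 : mod2 (sC X)), x - y) = (0, x) - (0, y).
    by apply: pairE => //=; rewrite subr0.
  by rewrite hg.
split => // -[x a] /=.
have -> : (x, a) = (cls2 (repr x), 0) + (0, a).
  by apply: pairE => /=; rewrite ?cls2K ?addr0 ?add0r.
rewrite (zmD hg).
have -> : mg n (cls2 (repr x), 0) = (map2 (mh n) x, 0).
  by have := c3 (repr x); rewrite /= => ->.
apply: pairE => //=.
apply: val_inj => /=; rewrite add0r mapt_val //.
have := c1 (0, a); rewrite /= => ->; by [].
Qed.

Lemma part6 (X Y : sppObj) (m m' : sppMor X Y) :
  is_sppMor m -> is_sppMor m' -> dmor_eq (Hmor m) (Hmor m') -> spp_eq m m'.
Proof.
move=> _ _ [ef eg eh]; split => // a.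
have := congr1 fst (eg (0, a)); rewrite /=.
have -> : map2 (sh m) 0 = map2 (sh m') 0 by rewrite /map2; congr cls2; exact: eh.
exact: addrI.
Qed.

Section Split.
Variables (U V : zmodType) (psi : V -> U).
Hypothesis hpsi : zmod_morphism psi.
Hypothesis V2 : forall v : V, v *+ 2 = 0.
Hypothesis surj : forall u : U, u *+ 2 = 0 -> exists v, psi v = u.

Definition QQ (G : set (U * V)) : Prop :=
  [/\ forall x y y', G (x, y) -> G (x, y') -> y = y',
      forall x y x' y', G (x, y) -> G (x', y') -> G (x + x', y + y')
    & forall x y, G (x, y) -> psi y = x].

Definition G0 (A : set (U * V)) : set (U * V) := fun p => A p \/ p = (0, 0).
Definition PP (A : set (U * V)) : Prop := QQ (G0 A).

Lemma PP0 : PP set0.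
Proof.
split.
- by move=> x y y' [//|[_ ->]] [//|[_ ->]].
- by move=> x y x' y' [//|[-> ->]] [//|[-> ->]]; right; rewrite !addr0.
- by move=> x y [//|[-> ->]]; rewrite (zm0 hpsi).
Qed.

Lemma psi2 x y : psi y = x -> x *+ 2 = 0.
Proof. by move=> <-; rewrite -(zm2 hpsi) V2 (zm0 hpsi). Qed.

Lemma chain_common (F : set (set (U * V))) : F `<=` PP -> total_on F subset ->
  forall p q, G0 (\bigcup_(X in F) X) p -> G0 (\bigcup_(X in F) X) q ->
  exists Y, [/\ PP Y, G0 Y p, G0 Y q & G0 Y `<=` G0 (\bigcup_(X in F) X)].
Proof.
move=> FP tot p q Hp Hq.
have sub : forall Y, F Y -> G0 Y `<=` G0 (\bigcup_(X in F) X).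
  by move=> Y FY r [Yr|->]; [left; exists Y|right].
case: Hp => [[X FX Xp]|->]; case: Hq => [[X' FX' Xq]|->].
- case: (tot _ _ FX FX') => [XX'|X'X].
    by exists X'; split; [exact: FP|left; exact: XX'|left|exact: sub].
  by exists X; split; [exact: FP|left|left; exact: X'X|exact: sub].
- by exists X; split; [exact: FP|left|right|exact: sub].
- by exists X'; split; [exact: FP|right|left|exact: sub].
- exists set0; split; [exact: PP0|by right|by right|].
  by move=> r [//|->]; right.
Qed.

Lemma chain_PP (F : set (set (U * V))) : F `<=` PP -> total_on F subset ->
  PP (\bigcup_(X in F) X).
Proof.
move=> FP tot; split.
- move=> x y y' H1 H2.
  have [Y [[f _ _] Y1 Y2 _]] := chain_common FP tot H1 H2.
  exact: f Y1 Y2.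
- move=> x y x' y' H1 H2.
  have [Y [[_ a _] Y1 Y2 s]] := chain_common FP tot H1 H2.
  exact/s/a.
- move=> x y H1.
  have [Y [[_ _ c] Y1 _ _]] := chain_common FP tot H1 H1.
  exact: c Y1.
Qed.

Lemma section_exists : exists s : U -> V,
  (forall u, u *+ 2 = 0 -> psi (s u) = u) /\
  (forall u u', u *+ 2 = 0 -> u' *+ 2 = 0 -> s (u + u') = s u + s u').
Proof.
have [A [PA Amax]] := @Zorn_bigcup _ PP (fun F FP tot => chain_PP FP tot).
have [f a c] := PA.
have dom : forall u0, u0 *+ 2 = 0 -> exists v, G0 A (u0, v).
  move=> u0 hu0; case: (pselect (exists v, G0 A (u0, v))) => // nd; exfalso.
  have [v0 hv0] := surj hu0.
  pose B : set (U * V) := fun p => A p \/ exists x y, G0 A (x, y) /\ p = (x + u0, y + v0).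
  have gB : forall p, G0 B p -> G0 A p \/ exists x y, G0 A (x, y) /\ p = (x + u0, y + v0).
    by move=> p [[Ap|sh]|->]; [left; left|right|left; right].
  have gB1 : forall p, G0 A p -> G0 B p.
    by move=> p [Ap|->]; [left; left|right].
  have gB2 : forall x y, G0 A (x, y) -> G0 B (x + u0, y + v0).
    by move=> x y H; left; right; exists x, y.
  apply: (Amax B).
    split; first by move=> p Ap; left.
    move=> BA; apply: nd; exists v0.
    have : B (u0, v0) by right; exists 0, 0; split; [right|rewrite !add0r].
    by move/BA => Au; left.
  split.
  - move=> x y y' /gB[H1|[x1 [y1 [H1 e1]]]] /gB[H2|[x2 [y2 [H2 e2]]]].
    + exact: f H1 H2.
    + exfalso; apply: nd; exists (y + y2); case: e2 => ex _.
      have := a _ _ _ _ H1 H2.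
      by rewrite ex addrAC -mulr2n (psi2 (c _ _ H2)) add0r.
    + exfalso; apply: nd; exists (y' + y1); case: e1 => ex _.
      have := a _ _ _ _ H2 H1.
      by rewrite ex addrAC -mulr2n (psi2 (c _ _ H1)) add0r.
    + case: e1 => ex ey; case: e2; rewrite ex => /addIr ex2 ->.
      by rewrite ey; congr (_ + _); apply: f H1 _; rewrite ex2.
  - move=> x y x' y' /gB[H1|[x1 [y1 [H1 e1]]]] /gB[H2|[x2 [y2 [H2 e2]]]].
    + exact/gB1/a.
    + case: e2 => -> ->; rewrite !addrA; exact/gB2/a.
    + case: e1 => -> ->; rewrite (addrAC x1) (addrAC y1).
      exact/gB2/a.
    + case: e1 => -> ->; case: e2 => -> ->.
      rewrite (addrACA x1) (addrACA y1) -!mulr2n hu0 V2 !addr0; exact/gB1/a.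
  - move=> x y /gB[H1|[x1 [y1 [H1 e1]]]]; first exact: c.
    by case: e1 => -> ->; rewrite (zmD hpsi) hv0 (c _ _ H1).
have : forall u, exists v, u *+ 2 = 0 -> G0 A (u, v).
  move=> u; case: (pselect (u *+ 2 = 0)) => [hu|nu].
    by have [v hv] := dom u hu; exists v.
  by exists 0.
case/choice => s hs; exists s; split.
  by move=> u hu; exact: c (hs u hu).
move=> u u' hu hu'; apply: f (hs _ _) (a _ _ _ _ (hs _ hu) (hs _ hu')).
by rewrite mulrnDl hu hu' addr0.
Qed.
End Split.

Lemma tval_insubd (U : zmodType) (x : U) : x *+ 2 = 0 ->
  Defs.tval (insubd 0 x : tors2 U) = x.
Proof. by move=> hx; rewrite insubdK //; apply/eqP. Qed.

Lemma subACA (W : zmodType) (a b c d : W) : a - b - (c - d) = a - c - (b - d).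
Proof. by rewrite !opprB (addrACA a (-b)) (addrACA a (-c)) (addrC (-c)). Qed.

Lemma tors2_eq (U : zmodType) (a b : tors2 U) : Defs.tval a = Defs.tval b -> a = b.
Proof. exact: val_inj. Qed.

Lemma part7 (M : diag) :
  is_eed M -> is_exact M -> (forall a, deta M a = 0) ->
  exists (X : sppObj) (i : dmor M (Hobj X)) (j : dmor (Hobj X) M),
    [/\ is_dmor i, is_dmor j,
        dmor_eq (dmor_comp i j) (dmor_id M) &
        dmor_eq (dmor_comp j i) (dmor_id (Hobj X))].
Proof.
case=> hpsi heta hchi [e2 ec eb] [ex1 ex2 ex3] heta0.
have B2 : forall b : dB M, b *+ 2 = 0.
  by move=> b; have := eb b; rewrite heta0 (zm0 hchi) => <-.
have surj : forall u : dA M, u *+ 2 = 0 -> exists b, dpsi M b = u.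
  move=> u hu; have hm : u \in tors2_pred (dA M) by apply/eqP.
  by have [b hb] := ex3 (Tors2 hm); exists b.
have [s [hs1 hs2]] := section_exists hpsi B2 surj.
have psit : forall b, dpsi M b *+ 2 = 0.
  by move=> b; rewrite -(zm2 hpsi) B2 (zm0 hpsi).
have s0 : s 0 = 0.
  have := hs2 0 0 (mul0rn _ _) (mul0rn _ _); rewrite addr0 => /esym/eqP.
  by rewrite -subr_eq0 addrK => /eqP.
have oppt : forall (W : zmodType) (w : W), w *+ 2 = 0 -> - w = w.
  by move=> W w hw; apply/eqP; rewrite eq_sym -subr_eq0 opprK -mulr2n hw.
have sB : forall u u' : dA M, u *+ 2 = 0 -> u' *+ 2 = 0 -> s (u - u') = s u - s u'.
  by move=> u u' hu hu'; rewrite (oppt _ _ hu') (oppt _ _ (B2 _)) hs2.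
have chi_cls : forall x y, cls2 x = cls2 y -> dchi M x = dchi M y.
  move=> x y /cls2_eqP [d hd]; apply/eqP; rewrite -subr_eq0 -hchi hd.
  by rewrite (zm2 hchi) B2.
have cls_chi : forall x y, dchi M x = dchi M y -> cls2 x = cls2 y.
  move=> x y hxy; apply/eqP; rewrite -subr_eq0 -cls2B; apply/eqP; apply: ex1.
  by rewrite hchi hxy subrr.
have : forall b, exists c, b - s (dpsi M b) = dchi M c.
  move=> b; apply/ex2; rewrite hpsi hs1 ?subrr //.
case/choice => cc hcc.
pose X := SPP (dA M) (dC M).
pose i := @DMor M (Hobj X) id
  (fun b => (cls2 (cc b), insubd 0 (dpsi M b))) id.
pose j := @DMor (Hobj X) M id
  (fun p => dchi M (repr p.1) + s (Defs.tval p.2)) id.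
exists X, i, j; split.
- split => //.
  + move=> x y; apply: pairE => /=.
      rewrite -cls2B; apply: cls_chi; rewrite hchi -!hcc hpsi sB ?psit //.
    exact: subACA.
    apply: val_inj => /=; rewrite !tval_insubd ?psit // hpsi.
  split.
  + by move=> b /=; rewrite tval_insubd.
  + by move=> a /=; rewrite heta0.
  + move=> c /=; apply: pairE => /=.
      by apply: cls_chi; rewrite -hcc ec s0 subr0.
    by rewrite ec; apply: tors2_eq; rewrite tval_insubd // mul0rn.
- split => //.
  + move=> x y /=.
    have -> : dchi M (repr (x.1 - y.1)) = dchi M (repr x.1) - dchi M (repr y.1).
      by rewrite -hchi; apply: chi_cls; rewrite cls2B !cls2K.
    rewrite sB ?tval_2 //.
    by rewrite opprD addrACA.
  split.
  + by move=> b /=; rewrite (zmD hpsi) ec add0r hs1 // tval_2.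
  + by move=> a /=; rewrite heta0.
  + by move=> c /=; rewrite s0 addr0; apply: chi_cls; rewrite cls2K.
- split => // b /=.
  rewrite tval_insubd //.
  have -> : dchi M (repr (cls2 (cc b))) = dchi M (cc b) by apply: chi_cls; rewrite cls2K.
  by rewrite -hcc subrK.
- split => // -[x a] /=; apply: pairE => /=.
    have h : dpsi M (dchi M (repr x) + s (Defs.tval a)) = Defs.tval a.
      by rewrite (zmD hpsi) ec add0r hs1 // tval_2.
    rewrite -[RHS]cls2K; apply: cls_chi.
    by rewrite -hcc h addrK.
  apply: val_inj => /=; rewrite tval_insubd ?psit //.
  by rewrite (zmD hpsi) ec add0r hs1 // tval_2.
Qed.

End Aux.

Theorem proposition3p17 :
  (* H is well defined on objects: H(A,C) is an exact extended eta-diagram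
     with eta = 0, i.e. it lies in the full subcategory *)
  (forall X : sppObj,
      is_eed (Hobj X) /\ is_exact (Hobj X) /\ (forall a, deta (Hobj X) a = 0)) /\
  (* H is well defined on morphisms *)
  (forall (X Y : sppObj) (m : sppMor X Y), is_sppMor m -> is_dmor (Hmor m)) /\
  (* H preserves identities *)
  (forall X : sppObj, dmor_eq (Hmor (spp_id X)) (dmor_id (Hobj X))) /\
  (* H preserves composition *)
  (forall (X Y Z : sppObj) (m : sppMor X Y) (n : sppMor Y Z),
      is_sppMor m -> is_sppMor n ->
      dmor_eq (Hmor (spp_comp m n)) (dmor_comp (Hmor m) (Hmor n))) /\
  (* H is full *)
  (forall (X Y : sppObj) (n : dmor (Hobj X) (Hobj Y)),
      is_dmor n -> exists m : sppMor X Y, is_sppMor m /\ dmor_eq (Hmor m) n) /\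
  (* H is faithful *)
  (forall (X Y : sppObj) (m m' : sppMor X Y),
      is_sppMor m -> is_sppMor m' -> dmor_eq (Hmor m) (Hmor m') -> spp_eq m m') /\
  (* H is essentially surjective onto {M in EEED : deta = 0} *)
  (forall M : diag,
      is_eed M -> is_exact M -> (forall a, deta M a = 0) ->
      exists (X : sppObj) (i : dmor M (Hobj X)) (j : dmor (Hobj X) M),
        [/\ is_dmor i, is_dmor j,
            dmor_eq (dmor_comp i j) (dmor_id M) &
            dmor_eq (dmor_comp j i) (dmor_id (Hobj X))]).
Proof.
split; first exact: part1.
split; first exact: part2.
split; first exact: part3.
split; first exact: part4.
split; first exact: part5.
split; first exact: part6.
exact: part7.
Qed.
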